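(* In the setting below, let $x=(z,Rj)\in Z_j$ with $j\in\mathbb N$ and let $i$ be an integer with $0\le i\le j$. Then there are a color $a\in A$ and an integer $M$ with $M+1\ge(j-i+1)/|A|$ such that $\operatorname{dist}_{T_a}(f_a(x),V_i^a)\ge M$, and moreover, for every $k\le i$ and every vertex $v\in V_k^a$ which is the lowest-level vertex of the geodesic segment from $f_a(x)$ to $v$ in $T_a$, we have $|f_a(x)v|\ge M$.
   Context: Setting: $Z$ is a bounded metric space with $\operatorname{diam}Z>0$, $\mu=\pi/\operatorname{diam}Z$, $A$ a set with $|A|=n+1$, and $\delta,\gamma\in(0,1)$, $\lambda\ge1$, $r\in(0,1)$ sufficiently small with $\lambda r<\delta$, $r<\operatorname{diam}Z$. $(\mathcal U_j)_{j\in\mathbb N}$ is a $\gamma$-separated characteristic sequence of open coverings of $Z$, each colored by $A$, $\mathcal U_j=\bigcup_{a\in A}\mathcal U_j^a$, with parameter $r$ and characteristic constants $\delta,\lambda$; that is: each $\mathcal U_j^a$ consists of pairwise disjoint open sets; (1) $\sup_{U\in\mathcal U_j}\operatorname{diam}U\le r^j$ and every ball of radius $\delta r^j$ in $Z$ is contained in some member of $\mathcal U_j$; (2) for every $a,j$ and $z\in Z$ there is $U\in\mathcal U_j^a$ with $\operatorname{dist}(z,U)\le\lambda r^j$; (3) for every $a$ and distinct $U\in\mathcal U_j^a$, $U'\in\mathcal U_{j'}^a$ with $j'\le j$, either $B_s(U)\cap U'=\emptyset$ or $B_s(U)\subset U'$, and if $j'<j$ there is $U''\in\mathcal U_j^a$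 with $B_s(U'')\subset U'$, where $s=\gamma r^j$ and $B_s(U)=\{z:\operatorname{dist}(z,U)<s\}$. Trees: put $\mathcal U_0^a=\{Z\}$. $T_a$ is the tree (edges of length $1$, path metric) with vertex set $V^a=\bigsqcup_{j\ge0}V_j^a$, where $V_j^a$ (vertices of level $j$) is in bijection with $\mathcal U_j^a$ (root $v_a$ corresponds to $Z$); $v\in V_j^a$, $v'\in V_{j'}^a$, $j'<j$, are joined by an edge iff the corresponding sets satisfy $U\subset U'$ and $j'$ is the maximal level $<j$ for which some member of $\mathcal U_{j'}^a$ contains $U$. Cone: $\operatorname{Co}(Z)=Z\times[0,\infty)/Z\times\{0\}$ with vertex $o$ and metric $|xx'|$ for $x=(z,t),x'=(z',t')$ equal to the length of the side $\bar x\bar x'$ of a triangle in $\mathrm H^2$ with sides $t,t'$ from $\bar o$ enclosing angle $\mu|zz'|$. Let $R=\ln(1/r)$, $Z_j=\{(z,jR):z\in Z\}$ for $j\ge1$, $Z_0=\{o\}$, $X=\bigcup_{j\ge0}Z_j$. Define $f_a:X\to T_a$ by $f_a(o)=v_a$ and, for $x=(z,jR)$, $j\ge1$, $f_a(x)$ is the vertex of $V_j^a$ corresponding to a (fixed choice of) member $U\in\mathcal U_j^a$ closest to $z$, i.e. minimizing $\operatorname{dist}(z,U)$. *)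

(* Defs.v *)
From HB Require Import structures.
From mathcomp Require Import all_boot all_order all_algebra.
From mathcomp Require Import classical_sets reals.
Set Implicit Arguments. Unset Strict Implicit. Unset Printing Implicit Defensive.
Import Order.TTheory GRing.Theory Num.Theory.
Local Open Scope classical_set_scope.
Local Open Scope ring_scope.

Section Metric.
Context {R : realType} {Z : Type} (d : Z -> Z -> R).

Definition is_metric : Prop :=
  [/\ (forall x y, 0 <= d x y), (forall x y, d x y = 0 <-> x = y),
      (forall x y, d x y = d y x) & (forall x y w, d x w <= d x y + d y w)].

Definition mbounded : Prop := exists B : R, forall x y, d x y <= B.

Definition diam_space : R := sup [set d p.1 p.2 | p in [set: Z * Z]].

Definition mball (z : Z) (s : R) : set Z := [set w | d z w < s].

Definition mopen (U : set Z) : Prop :=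
  forall u, U u -> exists e : R, 0 < e /\ mball u e `<=` U.

Definition dist_to (z : Z) (U : set Z) : R := inf [set d z u | u in U].

Definition nbhd (s : R) (U : set Z) : set Z := [set w | dist_to w U < s].

Definition diam_le (U : set Z) (c : R) : Prop :=
  forall u v, U u -> U v -> d u v <= c.

Context {A : finType}.

(* Ucov j a = U_j^a, meaningful for j >= 1. *)
Definition char_seq (delta gamma lambda r : R)
    (Ucov : nat -> A -> set (set Z)) : Prop :=
  (forall j a U, (1 <= j)%N -> Ucov j a U -> mopen U /\ U !=set0) /\
  (forall j z, (1 <= j)%N -> exists a U, Ucov j a U /\ U z) /\
  (forall j a U U', (1 <= j)%N -> Ucov j a U -> Ucov j a U' -> U <> U' ->
     U `&` U' = set0) /\
  (forall j a U, (1 <= j)%N -> Ucov j a U -> diam_le U (r ^+ j)) /\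
  (forall j z, (1 <= j)%N ->
     exists a U, Ucov j a U /\ mball z (delta * r ^+ j) `<=` U) /\
  (forall j a z, (1 <= j)%N ->
     exists U, Ucov j a U /\ dist_to z U <= lambda * r ^+ j) /\
  (* (3) with s = gamma r^j *)
  (forall a j j' U U', (1 <= j')%N -> (j' <= j)%N ->
     Ucov j a U -> Ucov j' a U' -> ((j' < j)%N \/ U <> U') ->
     (nbhd (gamma * r ^+ j) U `&` U' = set0 \/
      nbhd (gamma * r ^+ j) U `<=` U')) /\
  (forall a j j' U', (1 <= j')%N -> (j' < j)%N -> Ucov j' a U' ->
     exists U'', Ucov j a U'' /\ nbhd (gamma * r ^+ j) U'' `<=` U').

Definition closest_choice (Ucov : nat -> A -> set (set Z))
    (f : A -> Z -> nat -> set Z) : Prop :=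
  forall a z j, (1 <= j)%N ->
    Ucov j a (f a z j) /\
    (forall U, Ucov j a U -> dist_to z (f a z j) <= dist_to z U).

End Metric.

Section Tree.
Context {Z : Type} {A : finType} (Ucov : nat -> A -> set (set Z)) (a : A).

Definition Ulev (j : nat) : set (set Z) :=
  if j == 0%N then [set setT] else Ucov j a.

(* vertices of T_a: pairs (level j, member U of U_j^a) *)
Definition tvert (v : nat * set Z) : Prop := Ulev v.1 v.2.

Definition tparent (v w : nat * set Z) : Prop :=
  [/\ tvert v, tvert w, (w.1 < v.1)%N, v.2 `<=` w.2 &
      forall l, (w.1 < l < v.1)%N -> ~ (exists U, Ulev l U /\ v.2 `<=` U)].

Definition tadj (v w : nat * set Z) : Prop := tparent v w \/ tparent w v.

Fixpoint twalk (x : nat * set Z) (s : seq (nat * set Z)) : Prop :=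
  match s with
  | [::] => tvert x
  | y :: s' => tadj x y /\ twalk y s'
  end.

Definition tgeodesic (x : nat * set Z) (s : seq (nat * set Z)) : Prop :=
  twalk x s /\
  forall s', twalk x s' -> last x s' = last x s -> (size s <= size s')%N.

End Tree.

Fixpoint levels_ge {Z : Type} (k : nat) (x : nat * set Z) (s : seq (nat * set Z)) : Prop :=
  (k <= x.1)%N /\ match s with [::] => True | y :: s' => levels_ge k y s' end.

(* Main.v *)
Require Import Defs.
From HB Require Import structures.
From mathcomp Require Import all_boot all_order all_algebra.
From mathcomp Require Import boolp classical_sets reals.
From mathcomp Require Import zify lra.
Import Order.TTheory GRing.Theory Num.Theory.
Local Open Scope classical_set_scope.
Local Open Scope ring_scope.

Section Geo.
Context {R : realType} {Z : Type} (d : Z -> Z -> R).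
Hypothesis hm : is_metric d.

Lemma dist_has_inf z (U : set Z) : U !=set0 -> has_inf [set d z u | u in U].
Proof.
case: hm => d0 _ _ _ [u Uu]; split; first by exists (d z u), u.
exists 0 => _ [w _ <-]; exact: d0.
Qed.

Lemma dist_self z (U : set Z) : U z -> dist_to d z U <= 0.
Proof.
move=> Uz; case: hm => d0 dE _ _.
have -> : 0 = d z z by apply/esym/dE.
rewrite /dist_to; apply: ge_inf; last by exists z.
by exists 0 => _ [w _ <-]; exact: d0.
Qed.

Lemma in_nbhd (s : R) (U : set Z) z : 0 < s -> U z -> nbhd d s U z.
Proof. move=> s0 Uz; rewrite /nbhd /=. have h := dist_self z U Uz. by apply: le_lt_trans h s0. Qed.

Lemma far_pt z (U : set Z) (c e : R) u : U !=set0 -> diam_le d U c ->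
  0 < e -> U u -> d z u < dist_to d z U + c + e.
Proof.
move=> U0 dU e0 Uu; case: hm => _ _ dS dT.
have [_ [w Uw <-] lt] := inf_adherent e0 (dist_has_inf z U U0).
apply: (le_lt_trans (dT z w u)).
have := dU _ _ Uw Uu; rewrite /dist_to in lt *.
move: lt; set I := inf _ => lt dwu.
by rewrite -addrA (addrC c) addrA; apply: ltr_leD.
Qed.
End Geo.

Lemma count_le3 {T : eqType} (p q r : pred T) (s : seq T) :
  (forall x, x \in s -> p x -> q x || r x) -> (count p s <= count q s + count r s)%N.
Proof.
elim: s => //= y s IH H.
rewrite addnACA; apply: leq_add; last by apply: IH => x xs; apply: H; rewrite inE xs orbT.
have := H y (mem_head _ _).
by case: (p y) => //= /(_ isT); case: (q y); case: (r y).
Qed.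

Section Tree.
Context {Z : Type} {A : finType} (Ucov : nat -> A -> set (set Z)) (a : A).
Hypothesis hne : forall l U, (1 <= l)%N -> Ucov l a U -> U !=set0.
Hypothesis hdisj : forall l U U', (1 <= l)%N -> Ucov l a U -> Ucov l a U' ->
  U <> U' -> U `&` U' = set0.
Hypothesis hnest : forall l l' U U', (1 <= l')%N -> (l' < l)%N ->
  Ucov l a U -> Ucov l' a U' -> U `&` U' !=set0 -> U `<=` U'.

Definition insub (l : nat) (v : nat * set Z) : bool :=
  `[< (l <= v.1)%N /\ exists W, Ulev Ucov a l W /\ v.2 `<=` W >].

Lemma Ulev_pos l : (1 <= l)%N -> Ulev Ucov a l = Ucov l a.
Proof. by rewrite /Ulev; case: l. Qed.

Lemma insub_step l x y : (1 <= l)%N -> tadj Ucov a x y -> insub l x ->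
  insub l y || (l == x.1).
Proof.
move=> l1 [] [tx ty yx xy nointer] /asboolP [lx [W [UW xW]]].
- have [->|nl] := eqVneq l x.1; first by rewrite orbT.
  have ltlx : (l < x.1)%N by rewrite ltn_neqAle nl lx.
  have ly : (l <= y.1)%N.
    rewrite leqNgt; apply/negP => yl.
    by apply: (nointer l); [rewrite yl ltlx | exists W].
  have x1 : (1 <= x.1)%N by apply: leq_trans ltlx.
  move: tx; rewrite /tvert Ulev_pos // => tx.
  have [p xp] := hne _ _ x1 tx.
  rewrite Ulev_pos // in UW.
  apply/orP; left; apply/asboolP; split => //; exists W; split; first by rewrite Ulev_pos.
  have [ey|ny] := eqVneq y.1 l.
    move: ty; rewrite /tvert ey Ulev_pos // => ty.
    have [->//|neW] := pselect (y.2 = W).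
    have := hdisj _ _ _ l1 ty UW neW.
    by move=> /(congr1 (fun S => S p)); rewrite /= /setI /=; move=> h; exfalso; rewrite -h; split; [apply: xy|apply: xW].
  have ltly : (l < y.1)%N by rewrite ltn_neqAle eq_sym ny ly.
  move: ty; rewrite /tvert Ulev_pos ?(leq_trans l1 ly) // => ty.
  apply: (hnest _ _ _ _ l1 ltly ty UW); exists p; split; [exact: xy | exact: xW].
- apply/orP; left; apply/asboolP; split; first by apply: leq_trans lx (ltnW yx).
  by exists W; split => //; apply: subset_trans xW.
Qed.

Lemma walk_bound S x s : uniq S -> (forall l, l \in S -> (1 <= l)%N) ->
  twalk Ucov a x s ->
  (count (insub^~ x) S <= size s + count (insub^~ (last x s)) S)%N.
Proof.
move=> uS S1; elim: s x => [|y s IH] x /=; first by move=> _; rewrite add0n.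
move=> [axy wy].
apply: (leq_trans (@count_le3 _ (insub^~ x) (insub^~ y) (pred1 x.1) S _)).
  by move=> l lS /(insub_step _ _ _ (S1 _ lS) axy).
rewrite count_uniq_mem //.
have := IH y wy; have := leq_b1 (x.1 \in S).
move: (nat_of_bool _) => b; move: (count _ _) => c1; move: (count _ _) => c2; lia.
Qed.

Lemma walk_len S x s : uniq S -> (forall l, l \in S -> (1 <= l)%N) ->
  (forall l, l \in S -> insub l x) -> (forall l, l \in S -> ((last x s).1 < l)%N) ->
  twalk Ucov a x s -> (size S <= size s)%N.
Proof.
move=> uS S1 H1 H2 w; have := walk_bound _ _ _ uS S1 w.
have -> : count (insub^~ x) S = size S by apply/eqP; rewrite -all_count; apply/allP.
have -> : count (insub^~ (last x s)) S = 0%N.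
  apply/eqP; rewrite -leqn0 leqNgt -has_count; apply/hasPn => l lS.
  by apply/negP => /asboolP [hl _]; move: (H2 l lS); rewrite ltnNge hl.
by rewrite addn0.
Qed.
End Tree.

Lemma sum_count_ge {A : finType} (P : A -> pred nat) (s : seq nat) :
  (forall l, l \in s -> exists b, P b l) ->
  (size s <= \sum_(b : A) count (P b) s)%N.
Proof.
elim: s => //= l s IH H.
rewrite big_split /=.
have [b0 Pb0] := H l (mem_head _ _).
rewrite -add1n; apply: leq_add; last by apply: IH => x xs; apply: H; rewrite inE xs orbT.
by rewrite (bigD1 b0) //= Pb0.
Qed.

Theorem lemma3p5 (R : realType) (A : finType) (delta gamma lambda : R) :
  (0 < #|A|)%N -> 0 < delta < 1 -> 0 < gamma < 1 -> 1 <= lambda ->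
  exists r0 : R, 0 < r0 /\
  forall r : R, 0 < r < r0 -> lambda * r < delta ->
  forall (Z : Type) (d : Z -> Z -> R),
    is_metric d -> mbounded d -> 0 < diam_space d -> r < diam_space d ->
  forall Ucov : nat -> A -> set (set Z),
    char_seq d delta gamma lambda r Ucov ->
  forall f : A -> Z -> nat -> set Z, closest_choice d Ucov f ->
  forall (z : Z) (j i : nat), (1 <= j)%N -> (i <= j)%N ->
  exists (a : A) (M : int),
    ((j - i + 1)%:R / #|A|%:R <= (M + 1)%:~R :> R) /\
    (* dist_{T_a}(f_a(x), V_i^a) >= M *)
    (forall v, tvert Ucov a v -> v.1 = i ->
       forall s, twalk Ucov a (j, f a z j) s -> last (j, f a z j) s = v ->
       (M <= (size s)%:Z)%R) /\
    (* |f_a(x) v| >= M when v in V_k^a (k <= i) is lowest on the geodesic *)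
    (forall k, (k <= i)%N -> forall v, tvert Ucov a v -> v.1 = k ->
       forall s, tgeodesic Ucov a (j, f a z j) s -> last (j, f a z j) s = v ->
       levels_ge k (j, f a z j) s ->
       (M <= (size s)%:Z)%R).
Proof.
move=> A0 /andP[d0 d1] /andP[g0 g1] l1.
have l0 : 0 < lambda + 1 by lra.
exists (delta / (lambda + 1)); split; first by rewrite divr_gt0.
move=> r /andP[r0 rr0] _ Z d hm _ _ _ Ucov hc f hf z j i j1 ij.
have lr : (lambda + 1) * r < delta by rewrite -ltr_pdivlMl // mulrC.
have r1 : r < 1.
  have : r * (lambda + 1) < delta by rewrite mulrC.
  have : r <= r * (lambda + 1) by rewrite ler_peMr // ?ltW //; lra.
  lra.
case: hc => hopen [hcov [hdisj [hdiam1 [hball [hnear [h3a h3b]]]]]].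
pose P b l := `[< exists W, Ucov l b W /\ f b z j `<=` W >].
pose s0 := iota i.+1 (j - i.+1).
pose N b := count (P b) s0.
have geo : forall l, l \in s0 -> exists b, P b l.
  move=> l; rewrite mem_iota => /andP[h1 h2].
  have lj : (l < j)%N by clear -h1 h2; lia.
  have l1' : (1 <= l)%N by clear -h1; lia.
  have [b [W [hW hball']]] := hball l z l1'.
  exists b; apply/asboolP; exists W; split => //.
  move=> u Fu; apply: hball'; rewrite /mball /=.
  have [hF hFmin] := hf b z j j1.
  have [_ Fne] := hopen j b _ j1 hF.
  have [U' [hU' dU']] := hnear j b z j1.
  have dF := le_trans (hFmin U' hU') dU'.
  have diamF := hdiam1 j b _ j1 hF.
  have rj : r ^+ j = r ^+ l * r ^+ (j - l) by rewrite -exprD subnKC // ltnW.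
  have q1 : r ^+ (j - l) <= r.
    have -> : (j - l = (j - l - 1).+1)%N by clear -lj; lia.
    by rewrite exprS ler_piMr ?exprn_ile1 ?ltW.
  have tpos : 0 < r ^+ l by rewrite exprn_gt0.
  have q0 : 0 <= r ^+ (j - l) by rewrite exprn_ge0 ?ltW.
  have e0 : 0 < delta * r ^+ l - (lambda + 1) * r ^+ j.
    rewrite rj subr_gt0.
    have k1 : 0 < r ^+ l * (delta - (lambda + 1) * r) by rewrite mulr_gt0 // subr_gt0.
    have k2 : 0 <= ((lambda + 1) * r ^+ l) * (r - r ^+ (j - l)).
      by rewrite mulr_ge0 // ?subr_ge0 // mulr_ge0 // ltW.
    nra.
  have := far_pt d hm z _ _ _ u Fne diamF e0 Fu.
  lra.
have sumN := sum_count_ge P s0 geo.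
have [a amax] := @bigop.eq_bigmax A N A0.
have Nle : forall b, (N b <= N a)%N by move=> b; rewrite -amax; apply: leq_bigmax.
have sumle : (\sum_(b : A) N b <= #|A| * N a)%N.
  by rewrite -sum_nat_const; apply: leq_sum => b _; apply: Nle.
have key : (j - i + 1 <= (N a).+2 * #|A|)%N.
  rewrite size_iota in sumN.
  have := leq_trans sumN sumle; clear -A0; nia.
pose S := if (i < j)%N then j :: filter (P a) s0 else [::].
have sizeS : (j - i + 1 <= (size S).+1 * #|A|)%N.
  rewrite /S; case: ifP => ij'; last first.
    have -> : j = i by apply/eqP; rewrite eqn_leq ij leqNgt ij'.
    by rewrite subnn /= mul1n.
  rewrite /= size_filter; exact: key.
have hne : forall l U, (1 <= l)%N -> Ucov l a U -> U !=set0.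
  by move=> l U l1' hU; case: (hopen l a U l1' hU).
have hnest : forall l l' U U', (1 <= l')%N -> (l' < l)%N ->
    Ucov l a U -> Ucov l' a U' -> U `&` U' !=set0 -> U `<=` U'.
  move=> l l' U U' l1' ll' hU hU' [p [Up U'p]].
  have gr : 0 < gamma * r ^+ l by rewrite mulr_gt0 // exprn_gt0.
  case: (h3a a l l' U U' l1' (ltnW ll') hU hU' (or_introl ll')) => h.
  - exfalso; have : (nbhd d (gamma * r ^+ l) U `&` U') p.
      by split => //; exact: (in_nbhd d hm _ _ _ gr Up).
    by rewrite h.
  - by move=> w Uw; apply: h; exact: (in_nbhd d hm _ _ _ gr Uw).
have hd : forall l U U', (1 <= l)%N -> Ucov l a U -> Ucov l a U' ->
    U <> U' -> U `&` U' = set0 by move=> l U U'; apply: hdisj.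
have wl : forall s, twalk Ucov a (j, f a z j) s -> ((last (j, f a z j) s).1 <= i)%N ->
    (size S <= size s)%N.
  move=> s w hl.
  rewrite /S; case: ifP => ij'; last by [].
  have memS : forall l, l \in j :: filter (P a) s0 -> l = j \/ (P a l /\ (i < l < j)%N).
    move=> l; rewrite inE mem_filter mem_iota => /orP[/eqP->|/andP[pl /andP[h1 h2]]].
      by left.
    by right; split => //; apply/andP; split; clear -pl h1 h2; lia.
  apply: (walk_len Ucov a hne hd hnest (j :: filter (P a) s0) (j, f a z j) s _ _ _ _ w).
  - rewrite /= (filter_uniq _ (iota_uniq _ _)) andbT mem_filter mem_iota.
    by apply/negP => /andP[_ /andP[h1 h2]]; clear -h1 h2; lia.
  - by move=> l /memS [->|[_ /andP[h1 h2]]] //; clear -h1; lia.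
  - move=> l /memS [->|[/asboolP [W [hW FW]] /andP[h1 h2]]].
      apply/asboolP; split => //=; exists (f a z j); split => //.
      by rewrite Ulev_pos //; exact: (hf a z j j1).1.
    apply/asboolP; split; first by rewrite /=; clear -h2; lia.
    by exists W; split => //; rewrite Ulev_pos //; clear -h1; lia.
  - by move=> l /memS [->|[_ /andP[h1 h2]]]; [apply: leq_ltn_trans hl ij' | apply: leq_ltn_trans hl h1].
exists a, (size S)%:Z; split; [|split].
- rewrite ler_pdivrMr ?ltr0n // -PoszD -pmulrn -natrM ler_nat addn1.
  by move: sizeS; rewrite !addn1.
- move=> v _ vi s w lv; rewrite lez_nat; apply: wl => //; by rewrite lv vi.
- move=> k ki v _ vk s [w _] lv _; rewrite lez_nat; apply: wl => //; by rewrite lv vk.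
Qed.
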